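(* For every $N\ge 1$ and every integer $n\ge 1$, $$\Pr[\mathcal{N}_1(N)=n]=\frac{1}{(N-1)!}\left\langle {N-1\atop n-1}\right\rangle ,$$ where $\left\langle {m\atop j}\right\rangle$ is the Eulerian number, i.e. the number of permutations of $\{1,\dots,m\}$ with exactly $j$ descents (with $\left\langle {0\atop 0}\right\rangle=1$ and $\left\langle {m\atop j}\right\rangle=0$ for $j<0$ or $j\ge \max(m,1)$).
   Context: A random recursive hypergraph (RRH) is the random hypergraph process defined as follows. At size $N=1$ it has vertex set $\{v_1\}$ and edge set $\{\{v_1\}\}$. Given the hypergraph of size $N$ (vertices $v_1,\dots,v_N$, exactly $N$ edges), one chooses an existing edge $e$ uniformly at random, independently of the past, and adds a new vertex $v_{N+1}$ together with the new edge $e\cup\{v_{N+1}\}$; this gives the hypergraph of size $N+1$. The degree $d(v)$ of a vertex $v$ is the number of edges containing $v$. $\mathcal{N}_k(N)$ denotes the number of vertices of degree $k$ in the RRH of size $N$. *)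

(* Defs.v *)
From mathcomp Require Import all_boot all_order all_algebra all_fingroup.
Set Implicit Arguments. Unset Strict Implicit. Unset Printing Implicit Defensive.
Import GRing.Theory Num.Theory.

(* Vertices v_1,...,v_N are encoded as 0,...,N-1; an edge is a seq of vertices.
   A history of the process up to size N is the sequence of choices c 0,...,c (N-2),
   where c k (< k+1) is the index (0-based) of the existing edge chosen when going
   from size k+1 to size k+2. *)

Fixpoint rrh_edges (c : nat -> nat) (k : nat) : seq (seq nat) :=
  match k with
  | 0 => [:: [:: 0]]
  | k'.+1 => let es := rrh_edges c k' in rcons es (k'.+1 :: nth [::] es (c k'))
  end.

Definition degree (es : seq (seq nat)) (v : nat) : nat := count (fun e => v \in e) es.

Definition numdeg (es : seq (seq nat)) (N k : nat) : nat :=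
  count (fun v => degree es v == k) (iota 0 N).

Definition history (N : nat) := {ffun 'I_N.-1 -> 'I_N}.

Definition valid_history N (f : history N) : bool := [forall k, (f k <= k)%N].

Definition choices N (f : history N) : nat -> nat :=
  fun k => odflt 0%N (omap (fun i : 'I_N.-1 => val (f i)) (insub k)).

Definition Nk N (k : nat) (f : history N) : nat := numdeg (rrh_edges (choices f) N.-1) N k.

(* Probability under the RRH law: each valid history is equally likely (each
   choice uniform among existing edges, independently). *)
Definition rrh_prob N (E : pred (history N)) : rat :=
  (#|[set f : history N | valid_history f && E f]|%:R
   / #|[set f : history N | valid_history f]|%:R)%R.

Definition descents m (s : 'S_m) : nat :=
  #|[set i : 'I_m | (i.+1 < m)%N && [exists j : 'I_m, (val j == i.+1) && (s j < s i)%N]]|.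

Definition eulerian (m j : nat) : nat := #|[set s : 'S_m | descents s == j]|.

(* Main.v *)
Require Import Defs.
From mathcomp Require Import all_boot all_order all_algebra all_fingroup.
From mathcomp Require Import zify.

Fixpoint des (l : seq nat) : nat :=
  match l with
  | x :: r => (if r is y :: _ then (y < x) else false) + des r
  | [::] => 0
  end.

Definition ins (i x : nat) (t : seq nat) := take i t ++ x :: drop i t.

Lemma ins0 x t : ins 0 x t = x :: t.
Proof. by rewrite /ins take0 drop0. Qed.
Lemma insS i x y t : ins i.+1 x (y :: t) = y :: ins i x t.
Proof. by []. Qed.
Lemma ins_nil i x : ins i x [::] = [:: x].
Proof. by case: i. Qed.

Lemma iotaS0 n : iota 0 n.+1 = 0 :: map S (iota 0 n).
Proof. by rewrite /= -[1]/(1 + 0) iotaDl; congr (_ :: _); apply: eq_map => i; rewrite add1n. Qed.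

Lemma des_ins_bound M t i : all (fun z => z < M) t ->
  des t <= des (ins i M t) <= (des t).+1.
Proof.
elim: t i => [|x r IH] i; first by rewrite ins_nil.
rewrite /=.
move=> /andP [xM Hr].
have Mx : (M < x) = false by apply/negbTE; rewrite -leqNgt ltnW.
case: i => [|j].
  by rewrite ins0 /= xM; lia.
rewrite insS.
case: r IH Hr => [|y r'] IH Hr.
  by rewrite ins_nil /= Mx /=.
case: j => [|k].
  rewrite ins0 /= Mx /=.
  move: Hr => /= /andP [yM _]; rewrite yM; case: (y < x); lia.
rewrite insS /=.
have := IH k.+1 Hr; rewrite insS /=.
lia.
Qed.

Lemma count_cons' (T : Type) (a : pred T) y s : count a (y :: s) = a y + count a s.
Proof. by []. Qed.

Lemma count_iotaS (P : pred nat) n : count P (iota 0 n.+1) = P 0 + count (fun k => P k.+1) (iota 0 n).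
Proof. by rewrite iotaS0 count_cons' count_map. Qed.

Lemma desCC x y l : des [:: x, y & l] = (y < x) + des (y :: l).
Proof. by []. Qed.

Lemma count_ins M t : all (fun z => z < M) t ->
  count (fun i => des (ins i M t) == des t) (iota 0 (size t).+1) = (des t).+1.
Proof.
elim: t => [|x r IH]; first by move=> _; reflexivity.
move=> /andP [xM Hr].
have Mx : (M < x) = false by apply/negbTE; rewrite -leqNgt ltnW.
have Hs : size (x :: r) = (size r).+1 by [].
rewrite Hs count_iotaS.
have -> : nat_of_bool (des (ins 0 M (x :: r)) == des (x :: r)) = 0.
  rewrite ins0 desCC xM.
  have -> : (1 + des (x :: r) == des (x :: r)) = false by apply/eqP; lia.
  by [].
rewrite add0n.
move: (IH Hr) => {IH}.
case: r Hr Hs => [|y r'] Hr Hs.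
  by move=> _; rewrite /= Mx.
move: Hr => /andP [yM Hr'].
have Hs' : size (y :: r') = (size r').+1 by [].
rewrite Hs' !count_iotaS.
have -> : nat_of_bool (des (ins 0 M (y :: r')) == des (y :: r')) = 0.
  rewrite ins0 desCC yM.
  have -> : (1 + des (y :: r') == des (y :: r')) = false by apply/eqP; lia.
  by [].
rewrite add0n => IH'.
have -> : nat_of_bool (des (ins 1 M (x :: y :: r')) == des (x :: y :: r')) = (y < x).
  rewrite insS ins0 !desCC Mx yM /=.
  by case: (y < x); apply/eqP; lia.
rewrite [des [:: x, y & r']]desCC -addnS -IH'; congr (_ + _); congr (_ + _).
  by rewrite !insS desCC eqn_add2l.
apply: eq_count => k.
by rewrite !insS desCC eqn_add2l.
Qed.

Lemma sum_if (T : Type) (a : pred T) (l : seq T) u v :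
  \sum_(i <- l) (if a i then u else v) = count a l * u + (size l - count a l) * v.
Proof.
elim: l => [|x l IH]; first by rewrite big_nil.
rewrite big_cons IH /=.
have := count_size a l.
case: (a x) => /= H.
  by rewrite add1n subSS mulSn addnA.
by rewrite add0n subSn // mulSn addnCA.
Qed.

Lemma sum_ins M t (F : nat -> nat) : all (fun z => z < M) t ->
  \sum_(i <- iota 0 (size t).+1) F (des (ins i M t)) =
  (des t).+1 * F (des t) + (size t - des t) * F (des t).+1.
Proof.
move=> Hall.
rewrite (eq_bigr (fun i => if des (ins i M t) == des t then F (des t) else F (des t).+1)).
  by rewrite sum_if count_ins // size_iota subSS.
move=> i _; case: eqP => [->//|H].
have := des_ins_bound M t i Hall.
by move=> H2; congr F; lia.
Qed.

Lemma rrh_edges_ext c c' k : (forall i, i < k -> c i = c' i) ->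
  rrh_edges c k = rrh_edges c' k.
Proof.
elim: k => [//|k IH] H /=.
rewrite IH ?H //; move=> i Hi; apply: H; lia.
Qed.

Lemma size_rrh c k : size (rrh_edges c k) = k.+1.
Proof. by elim: k => //= k IH; rewrite size_rcons IH. Qed.

Lemma rrh_bound c k e v : e \in rrh_edges c k -> v \in e -> v <= k.
Proof.
elim: k e v => [|k IH] e v /=.
  by rewrite inE => /eqP -> ; rewrite inE => /eqP ->.
rewrite mem_rcons inE => /orP [/eqP ->|He].
  rewrite inE => /orP [/eqP -> //|Hv].
  case: (ltnP (c k) (size (rrh_edges c k))) => Hck.
    by have := IH _ v (mem_nth [::] Hck) Hv; lia.
  by move: Hv; rewrite nth_default.
by move=> Hv; have := IH _ _ He Hv; lia.
Qed.

Lemma rrh_self c k v : v <= k -> v \in nth [::] (rrh_edges c k) v.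
Proof.
elim: k v => [|k IH] v.
  by rewrite leqn0 => /eqP ->.
move=> Hv /=; rewrite nth_rcons size_rrh.
case: ltnP => Hv'.
  by apply: IH; lia.
have -> : v = k.+1 by lia.
by rewrite eqxx inE eqxx.
Qed.

Lemma degree_rcons es e v : degree (rcons es e) v = degree es v + (v \in e).
Proof. by rewrite /degree -cats1 count_cat /= addn0. Qed.

Lemma degree_out c k : degree (rrh_edges c k) k.+1 = 0.
Proof.
rewrite /degree (eq_in_count (a2 := pred0)) ?count_pred0 //.
move=> e He /=; apply/negbTE/negP => Hv.
by have := rrh_bound c k e (k.+1) He Hv; lia.
Qed.

Lemma degree_nth es v : degree es v = count (fun i => v \in nth [::] es i) (iota 0 (size es)).
Proof. by rewrite /degree -{1}(mkseq_nth [::] es) /mkseq count_map. Qed.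

Lemma degree_ge1 es v : v < size es -> v \in nth [::] es v -> 1 <= degree es v.
Proof.
move=> Hv Hin; rewrite degree_nth -has_count; apply/hasP; exists v => //.
by rewrite mem_iota.
Qed.

Lemma degree_ge2 es v p : v < size es -> p < size es -> v != p ->
  v \in nth [::] es v -> v \in nth [::] es p -> 2 <= degree es v.
Proof.
move=> Hv Hp Hvp H1 H2; rewrite degree_nth.
have Hsub : subpred (predU (pred1 v) (pred1 p)) (fun i => v \in nth [::] es i).
  by move=> i /orP [/eqP ->|/eqP ->].
apply: leq_trans (sub_count Hsub _).
have := count_predUI (pred1 v) (pred1 p) (iota 0 (size es)).
have -> : count (predI (pred1 v) (pred1 p)) (iota 0 (size es)) = 0.
  apply/eqP; rewrite eqn0Ngt -has_count; apply/hasPn => i _ /=.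
  by apply/negP => /andP [/eqP -> /eqP E]; rewrite E eqxx in Hvp.
rewrite addn0 !count_uniq_mem ?iota_uniq // !mem_iota /= Hv Hp.
by move=> ->.
Qed.

Definition E (s : seq nat) := rrh_edges (nth 0 s) (size s).
Definition leaves (s : seq nat) := numdeg (E s) (size s).+1 1.

Lemma E_rcons s p : E (rcons s p) = rcons (E s) ((size s).+1 :: nth [::] (E s) p).
Proof.
rewrite /E size_rcons /= nth_rcons ltnn eqxx.
have -> : rrh_edges (nth 0 (rcons s p)) (size s) = rrh_edges (nth 0 s) (size s).
  by apply: rrh_edges_ext => i Hi; rewrite nth_rcons Hi.
by [].
Qed.

Lemma count_andC1 (a : pred nat) p l :
  count (fun v => a v && (v != p)) l + count (fun v => a v && (v == p)) l = count a l.
Proof.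
elim: l => //= x l IH; rewrite -IH.
by case: (a x); case: (x == p) => /=; lia.
Qed.

Lemma count_and1 (a : pred nat) p l :
  count (fun v => a v && (v == p)) l = a p * count (pred1 p) l.
Proof.
elim: l => [|x l IH] /=; first by rewrite muln0.
rewrite IH.
by case: eqP => [->|_] /=; rewrite ?andbF ?andbT; case: (a p) => /=; lia.
Qed.

Lemma leaves_rcons s p : p <= size s ->
  leaves (rcons s p) = if degree (E s) p == 1 then leaves s else (leaves s).+1.
Proof.
move=> Hp.
rewrite /leaves E_rcons size_rcons /numdeg.
have -> : iota 0 (size s).+2 = iota 0 (size s).+1 ++ [:: (size s).+1].
  by rewrite -addn1 iotaD.
rewrite count_cat count_cons'.
set es := E s.
have -> : (degree (rcons es ((size s).+1 :: nth [::] es p)) (size s).+1 == 1) = true.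
  by rewrite degree_rcons /es /E degree_out inE eqxx.
rewrite [count _ [::]]/= addn0.

have Hses : size es = (size s).+1 by rewrite /es /E size_rrh.
rewrite (eq_in_count (a2 := fun v => (degree es v == 1) && (v != p))); last first.
  move=> v; rewrite mem_iota add0n => /andP [_ Hv].
  rewrite degree_rcons inE.
  have -> : (v == (size s).+1) = false by apply/eqP; lia.
  rewrite /=.
  have Hself : v \in nth [::] es v by apply: rrh_self; lia.
  have H1 := degree_ge1 es v.
  have Hves : v < size es by rewrite Hses.
  have Hpes : p < size es by rewrite Hses.
  case Hin: (v \in nth [::] es p) => /=.
    case: (eqVneq v p) => [Evp|Nvp] /=.
      by rewrite andbF; apply/negbTE/eqP; have := H1 Hves Hself; lia.
    have := degree_ge2 es v p Hves Hpes Nvp Hself Hin.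
    by move=> H2; rewrite andbT; apply/idP/idP => /eqP H; apply/eqP; lia.
  rewrite addn0.
  case: (eqVneq v p) => [Evp|Nvp]; last by rewrite andbT.
  by move: Hin; rewrite -Evp Hself.
have := count_andC1 (fun v => degree es v == 1) p (iota 0 (size s).+1).
rewrite count_and1 count_uniq_mem ?iota_uniq // mem_iota /= add0n.
have -> : p < (size s).+1 by lia.
by case: (degree es p == 1) => /=; lia.
Qed.

Lemma sum_leaves s (F : nat -> nat) :
  \sum_(p <- iota 0 (size s).+1) F (leaves (rcons s p)) =
  leaves s * F (leaves s) + ((size s).+1 - leaves s) * F (leaves s).+1.
Proof.
rewrite big_seq (eq_bigr (fun p => if degree (E s) p == 1 then F (leaves s) else F (leaves s).+1)).
  by rewrite -big_seq sum_if size_iota.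
move=> p; rewrite mem_iota => /andP [_ Hp].
by rewrite leaves_rcons; [case: ifP | lia].
Qed.

Fixpoint subex (m : nat) : seq (seq nat) :=
  match m with
  | 0 => [:: [::]]
  | m'.+1 => [seq rcons s p | s <- subex m', p <- iota 0 m'.+1]
  end.

Lemma subex_mem m s :
  (s \in subex m) = (size s == m) && all (fun k => nth 0 s k <= k) (iota 0 m).
Proof.
elim: m s => [|m IH] s.
  by rewrite inE andbT size_eq0.
apply/allpairsP/andP.
  move=> [[s' p] [Hs' Hp ->]].
  rewrite mem_iota in Hp; simpl in Hs', Hp.
  move: Hs'; rewrite IH => /andP [/eqP Hsz Hall].
  rewrite size_rcons Hsz; split; first by [].
  apply/allP => k; rewrite mem_iota add0n => /andP [_ Hk].
  rewrite nth_rcons Hsz.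
  case: ltnP => Hkm.
    by apply: (allP Hall); rewrite mem_iota.
  have -> : k = m by lia.
  by rewrite eqxx /=; lia.
case/lastP: s => [|s' p]; first by move=> [].
rewrite size_rcons => [[/eqP [Hsz] Hall]].
exists (s', p); split => //.
  rewrite IH Hsz eqxx /=; apply/allP => k; rewrite mem_iota add0n => /andP [_ Hk].
  have := allP Hall k; rewrite mem_iota nth_rcons Hsz Hk; apply; lia.
have := allP Hall m; rewrite mem_iota nth_rcons Hsz ltnn eqxx mem_iota.
move=> H; rewrite /=; have := H ltac:(lia); lia.
Qed.

Lemma subex_uniq m : uniq (subex m).
Proof.
elim: m => // m IH.
change (uniq [seq rcons s p | s <- subex m, p <- iota 0 m.+1]).
apply: allpairs_uniq => //; first exact: iota_uniq.
by move=> [s p] [s' p'] _ _ /= /rcons_inj.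
Qed.

Lemma size_subex m : size (subex m) = m`!.
Proof. elim: m => // m IH.
change (size [seq rcons s p | s <- subex m, p <- iota 0 m.+1] = m.+1`!).
by rewrite size_allpairs IH size_iota factS mulnC. Qed.

Lemma ins_perm m t i : perm_eq (ins i m t) (m :: t).
Proof.
rewrite /ins -cat1s perm_catCA /= perm_cons cat_take_drop //.
Qed.

Lemma iota_rcons m : perm_eq (iota 0 m.+1) (m :: iota 0 m).
Proof. by rewrite -addn1 iotaD add0n perm_catC; exact: perm_refl. Qed.

Lemma perms_ins m :
  perm_eq (permutations (iota 0 m.+1))
    [seq ins i m t | t <- permutations (iota 0 m), i <- iota 0 m.+1].
Proof.
apply: uniq_perm; first exact: permutations_uniq.
  apply: allpairs_uniq; [exact: permutations_uniq | exact: iota_uniq|].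
  move=> [t i] [t' j] /allpairsP [[t1 i1] [Ht1 Hi1 [-> ->]]]
    /allpairsP [[t2 i2] [Ht2 Hi2 [-> ->]]] Heq.
  simpl in Heq.
  move: Ht1 Ht2 Hi1 Hi2; rewrite !mem_permutations !mem_iota /= => Ht1 Ht2 Hi1 Hi2.
  have Hm1 : m \notin t1 by rewrite (perm_mem Ht1) mem_iota ltnn andbF.
  have Hm2 : m \notin t2 by rewrite (perm_mem Ht2) mem_iota ltnn andbF.
  have Hs1 : size t1 = m by rewrite (perm_size Ht1) size_iota.
  have Hs2 : size t2 = m by rewrite (perm_size Ht2) size_iota.
  have Hidx : forall i0 t0, m \notin t0 -> i0 <= size t0 -> index m (ins i0 m t0) = i0.
    move=> i0 t0 Hm Hi0; rewrite /ins index_cat.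
    have -> : (m \in take i0 t0) = false by apply/negbTE; apply: contra Hm; apply: mem_take.
    by rewrite /= eqxx addn0 size_takel.
  have Hflt : forall i0 t0, m \notin t0 -> filter (predC1 m) (ins i0 m t0) = t0.
    move=> i0 t0 Hm; rewrite /ins filter_cat /= eqxx /= -filter_cat cat_take_drop.
    apply/all_filterP/allP => x Hx /=; apply/eqP => Ex; by rewrite -Ex Hx in Hm.
  have Ei : i1 = i2.
    by rewrite -(Hidx i1 t1) // ?Hs1 ?Heq ?Hidx // ?Hs2; lia.
  have Et : t1 = t2 by rewrite -(Hflt i1 t1) // Heq Hflt.
  by rewrite Ei Et.
move=> x; rewrite mem_permutations; apply/idP/allpairsP.
  move=> Hx.
  have Hmx : m \in x by rewrite (perm_mem Hx) mem_iota /=.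
  have Hsx : size x = m.+1 by rewrite (perm_size Hx) size_iota.
  set i := index m x.
  have Hi : i < size x by rewrite index_mem.
  exists (take i x ++ drop i.+1 x, i) => /=; split.
  - have Ex : x = take i x ++ m :: drop i.+1 x.
      by rewrite -{1}(cat_take_drop i x) (drop_nth 0 Hi) nth_index.
    have P : perm_eq (take i x ++ m :: drop i.+1 x) (m :: (take i x ++ drop i.+1 x)).
      by rewrite -cat1s perm_catCA.
    rewrite -Ex in P.
    rewrite mem_permutations -(perm_cons m).
    apply: (perm_trans _ (iota_rcons m)); apply: (perm_trans _ Hx).
    by rewrite perm_sym.
  - by change (i \in iota 0 m.+1); rewrite mem_iota add0n -Hsx Hi.
  - rewrite /ins take_size_cat ?size_takel ?(ltnW Hi) // drop_size_cat ?size_takel ?(ltnW Hi) //.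
    by rewrite -(nth_index 0 Hmx) -drop_nth // cat_take_drop.
move=> [[t i] /= [Ht Hi ->]].
move: Ht; rewrite mem_permutations => Ht.
apply: perm_trans (ins_perm m t i) _.
by rewrite perm_sym (perm_trans (iota_rcons m)) // perm_cons perm_sym.
Qed.

Lemma perm_all m t : t \in permutations (iota 0 m) -> all (fun z => z < m) t /\ size t = m.
Proof.
rewrite mem_permutations => Ht; split; last by rewrite (perm_size Ht) size_iota.
by apply/allP => z; rewrite (perm_mem Ht) mem_iota.
Qed.

Lemma main_sum m (F : nat -> nat) :
  \sum_(s <- subex m) F (leaves s) = \sum_(t <- permutations (iota 0 m)) F (des t).+1.
Proof.
elim: m F => [|m IH] F.
  by rewrite /= big_seq1 (_ : permutations [::] = [:: [::]]) // big_seq1.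
change (\sum_(s <- [seq rcons s p | s <- subex m, p <- iota 0 m.+1]) F (leaves s) = \sum_(t <- permutations (iota 0 m.+1)) F (des t).+1).
rewrite big_allpairs_dep.
rewrite (perm_big _ (perms_ins m)) big_allpairs_dep.
have Hl : \sum_(s <- subex m) \sum_(p <- iota 0 m.+1) F (leaves (rcons s p)) =
  \sum_(s <- subex m) (leaves s * F (leaves s) + (m.+1 - leaves s) * F (leaves s).+1).
  rewrite big_seq [RHS]big_seq; apply: eq_bigr => s.
  rewrite subex_mem => /andP [/eqP Hs _].
  by rewrite -Hs sum_leaves.
rewrite Hl (IH (fun l => l * F l + (m.+1 - l) * F l.+1)).
rewrite big_seq [RHS]big_seq; apply: eq_bigr => t Ht.
have [Hall Hs] := perm_all m t Ht.
rewrite -{2}Hs (sum_ins m t (fun x => F x.+1) Hall) Hs subSS.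
by [].
Qed.

Definition liftn m (g : 'I_m -> nat) (k : nat) : nat := odflt 0 (omap g (insub k)).
Arguments liftn {m}.

Lemma liftnE m (g : 'I_m -> nat) (i : 'I_m) : liftn g i = g i.
Proof. by rewrite /liftn valK. Qed.

Lemma liftnE' m (g : 'I_m -> nat) k (Hk : k < m) : liftn g k = g (Ordinal Hk).
Proof. by rewrite -liftnE. Qed.

Definition tlist m (g : 'I_m -> nat) := mkseq (liftn g) m.
Arguments tlist {m}.

Lemma size_tlist m (g : 'I_m -> nat) : size (tlist g) = m.
Proof. by rewrite size_mkseq. Qed.

Lemma nth_tlist m (g : 'I_m -> nat) (i : 'I_m) : nth 0 (tlist g) i = g i.
Proof. rewrite /tlist (nth_mkseq 0 (liftn g) (ltn_ord i)). exact: liftnE. Qed.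

Lemma tlist_inj m (g g' : 'I_m -> nat) : tlist g = tlist g' -> g =1 g'.
Proof. by move=> E i; rewrite -(nth_tlist _ g i) -(nth_tlist _ g' i) E. Qed.

Lemma card_count (T : finType) (P : pred T) : #|[set x | P x]| = count P (index_enum T).
Proof. by rewrite -sum1dep_card sum1_count. Qed.

Definition hl m (f : history m.+1) : seq nat := tlist (fun i => val (f i)).
Arguments hl {m}.

Lemma Nk_hl m (f : history m.+1) k : Nk k f = numdeg (E (hl f)) (size (hl f)).+1 k.
Proof.
rewrite /Nk /E size_tlist /=; congr numdeg.
apply: rrh_edges_ext => i Hi.
by rewrite /hl /tlist nth_mkseq.
Qed.

Lemma hl_subex m (f : history m.+1) : (hl f \in subex m) = valid_history f.
Proof.
rewrite subex_mem size_tlist eqxx /=.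
apply/allP/forallP => H.
  move=> k; have := H k; rewrite mem_iota /= ltn_ord nth_tlist; by apply.
move=> k; rewrite mem_iota add0n => /andP [_ Hk].
by rewrite /hl (nth_tlist _ _ (Ordinal Hk)); apply: H.
Qed.

Lemma hl_perm m :
  perm_eq [seq hl f | f <- [seq f <- index_enum (history m.+1) | valid_history f]] (subex m).
Proof.
apply: uniq_perm; last 1 first.
- move=> s; apply/mapP/idP.
    by move=> [f]; rewrite mem_filter => /andP [Hv _] ->; rewrite hl_subex.
  move=> Hs; move: (Hs); rewrite subex_mem => /andP [/eqP Hsz Hall].
  have Hb : forall i : 'I_m, nth 0 s i < m.+1.
    move=> i; have := allP Hall i; rewrite mem_iota /= ltn_ord => /(_ isT); have := ltn_ord i; lia.
  pose f : history m.+1 := [ffun i : 'I_m => inord (nth 0 s i)].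
  have Hf : hl f = s.
    apply: (@eq_from_nth _ 0); first by rewrite size_tlist Hsz.
    move=> k; rewrite size_tlist => Hk.
    rewrite /hl (nth_tlist _ _ (Ordinal Hk)) ffunE; exact: (inordK (Hb (Ordinal Hk))).
  exists f; last by rewrite Hf.
  by rewrite mem_filter mem_index_enum andbT -hl_subex Hf.
- rewrite map_inj_in_uniq ?filter_uniq ?index_enum_uniq //.
  move=> f f' _ _ E; apply/ffunP => i; apply: val_inj.
  exact: (tlist_inj _ _ _ E i).
- exact: subex_uniq.
Qed.

Lemma card_hist m (Q : pred (seq nat)) :
  #|[set f : history m.+1 | valid_history f && Q (hl f)]| = count Q (subex m).
Proof.
rewrite card_count -(seq.permP (hl_perm m)) count_map count_filter.
by apply: eq_count => f; rewrite /= andbC.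
Qed.

Lemma des_count l :
  des l = count (fun k => (k.+1 < size l) && (nth 0 l k.+1 < nth 0 l k)) (iota 0 (size l)).
Proof.
elim: l => [//|x r IH].
have -> : size (x :: r) = (size r).+1 by [].
have -> : des (x :: r) = (if r is y :: _ then (y < x) else false) + des r by [].
rewrite count_iotaS IH.
congr (_ + _).
by case: r {IH}.
Qed.

Definition hs m (s : 'S_m) : seq nat := tlist (fun i => val (s i)).
Arguments hs {m}.

Lemma map_val_ord m : perm_eq [seq val i | i <- index_enum 'I_m] (iota 0 m).
Proof.
apply: uniq_perm; first by rewrite map_inj_uniq ?index_enum_uniq //; exact: val_inj.
  exact: iota_uniq.
move=> x; rewrite mem_iota add0n /=; apply/mapP/idP.
  by move=> [i _ ->]; exact: ltn_ord.
by move=> Hx; exists (Ordinal Hx); rewrite ?mem_index_enum.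
Qed.

Lemma descents_des m (s : 'S_m) : descents s = des (hs s).
Proof.
rewrite /descents card_count.
rewrite (eq_count (a2 := (fun k => (k.+1 < m) && (liftn (fun i => val (s i)) k.+1 < liftn (fun i => val (s i)) k)) \o val)); last first.
  move=> i /=; case Hi: (i.+1 < m) => //=.
  rewrite liftnE (liftnE' _ _ _ Hi).
  apply/existsP/idP.
    move=> [j /andP [/eqP Hj Hlt]].
    by have -> : Ordinal Hi = j by apply: val_inj; rewrite /= Hj.
  by move=> H; exists (Ordinal Hi); rewrite /= eqxx.
rewrite -count_map (seq.permP (map_val_ord m)) des_count /hs size_tlist.
apply: eq_in_count => k; rewrite mem_iota add0n => /andP [_ Hk] /=.
case Hk1: (k.+1 < m) => //=.
by rewrite /tlist !nth_mkseq.
Qed.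

Lemma hs_mem m (s : 'S_m) : hs s \in permutations (iota 0 m).
Proof.
rewrite mem_permutations; apply: uniq_perm; last 1 first.
- move=> x; rewrite mem_iota add0n /=; apply/mapP/idP.
    move=> [k]; rewrite mem_iota add0n => /andP [_ Hk] ->.
    by rewrite (liftnE' _ _ _ Hk); exact: ltn_ord.
  move=> Hx; exists (val ((s^-1)%g (Ordinal Hx))); first by rewrite mem_iota /= ltn_ord.
  by rewrite liftnE permKV.
- rewrite /hs /tlist /mkseq map_inj_in_uniq ?iota_uniq //.
  move=> k k'; rewrite !mem_iota !add0n => /andP [_ Hk] /andP [_ Hk'].
  rewrite (liftnE' _ _ _ Hk) (liftnE' _ _ _ Hk') => /val_inj /perm_inj E.
  by have := congr1 val E.
- exact: iota_uniq.
Qed.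

Lemma hs_surj m l : perm_eq l (iota 0 m) -> exists s : 'S_m, hs s = l.
Proof.
move=> Hl.
have Hsz : size l = m by rewrite (perm_size Hl) size_iota.
have Hu : uniq l by rewrite (perm_uniq Hl) iota_uniq.
case: m Hl Hsz => [|n] Hl Hsz.
  by exists 1%g; move: Hsz; case: l {Hl Hu}.
have Hb : forall i : 'I_n.+1, nth 0 l i < n.+1.
  move=> i; have : nth 0 l i \in l by rewrite mem_nth // Hsz.
  by rewrite (perm_mem Hl) mem_iota.
pose f := fun i : 'I_n.+1 => (inord (nth 0 l i) : 'I_n.+1).
have finj : injective f.
  move=> i j E0; have := congr1 (@nat_of_ord _) E0; rewrite /f !inordK // => E.
  apply: val_inj; apply/eqP; rewrite -(nth_uniq 0 (s:=l)) ?Hsz ?ltn_ord //; exact/eqP.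
exists (perm finj).
apply: (@eq_from_nth _ 0); first by rewrite size_tlist Hsz.
move=> k; rewrite size_tlist => Hk.
rewrite /hs (nth_tlist _ _ (Ordinal Hk)) permE /f.
exact: (inordK (Hb (Ordinal Hk))).
Qed.

Lemma hs_perm m : perm_eq [seq hs s | s <- index_enum 'S_m] (permutations (iota 0 m)).
Proof.
apply: uniq_perm.
- rewrite map_inj_uniq ?index_enum_uniq // => s s' E.
  apply/permP => i; apply: val_inj; exact: (tlist_inj _ _ _ E i).
- exact: permutations_uniq.
move=> l; apply/mapP/idP.
  by move=> [s _ ->]; exact: hs_mem.
rewrite mem_permutations => /hs_surj [s Hs].
by exists s; rewrite ?mem_index_enum.
Qed.

Lemma eulerian_count m k : eulerian m k = count (fun t => des t == k) (permutations (iota 0 m)).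
Proof.
rewrite /eulerian card_count -(seq.permP (hs_perm m)) count_map.
by apply: eq_count => s; rewrite /= descents_des.
Qed.

Lemma count_sum (T : Type) (a : pred T) r : count a r = \sum_(x <- r) (if a x then 1 else 0).
Proof. by rewrite -sum1_count big_mkcond. Qed.

Theorem mainTheorem1 (N n : nat) : (1 <= N)%N -> (1 <= n)%N ->
  rrh_prob (fun f : history N => Nk 1 f == n) =
  ((eulerian N.-1 n.-1)%:R / (N.-1)`!%:R)%R.
Proof.
case: N => [//|m] _; case: n => [//|n] _.
rewrite /rrh_prob.
have HA : [set f : history m.+1 | valid_history f && (Nk 1 f == n.+1)] =
   [set f | valid_history f && (fun l => leaves l == n.+1) (hl f)].
  by apply/eq_finset => f; rewrite /= Nk_hl.
have HV : [set f : history m.+1 | valid_history f] =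
   [set f | valid_history f && (fun _ => true) (hl f)].
  by apply/eq_finset => f; rewrite /= andbT.
rewrite HA HV (card_hist m (fun l => leaves l == n.+1)) (card_hist m (fun _ => true)) count_predT size_subex.
rewrite count_sum (main_sum m (fun x => if x == n.+1 then 1 else 0)).
rewrite (eulerian_count m n) count_sum.
by [].
Qed.
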